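(* There is an absolute constant $c>0$ such that: given a 2D SLP $\mathcal G$ deriving a 2D string $T\in\Sigma^{N\times M}$ with $N\le M$, one can construct a 1D SLP of size at most $c\cdot|\mathcal G|\cdot N$ deriving the string $T[1]\cdot T[2]\cdots T[N]$ of length $NM$ (the concatenation of all rows of $T$, from top to bottom).
   Context: Let $\Sigma$ be a fixed finite alphabet. A 2D string of size $n\times m$ is an $n\times m$ array of characters of $\Sigma$; $\mathrm{h}(S)=n$ is its height and $\mathrm{w}(S)=m$ its width; $S[i]$ denotes its $i$-th row (a string of length $m$). For 2D strings $A,B$ with $\mathrm{h}(A)=\mathrm{h}(B)$, $A \oplus_{\mathrm h} B$ denotes their horizontal concatenation ($B$ placed to the right of $A$); for $\mathrm{w}(A)=\mathrm{w}(B)$, $A\oplus_{\mathrm v} B$ denotes their vertical concatenation ($B$ placed below $A$). A 2D SLP is a triple $\mathcal{G}=(\mathcal{V},\mathcal{S},\rho)$ where $\mathcal{V}$ is a finite set of nonterminals (disjoint from $\Sigma$), each $X\in\mathcal V$ having a dimension $(\mathrm h(X),\mathrm w(X))$, $\mathcal S\in\mathcal V$ is the starting nonterminal, and $\rho$ assigns to each $X$ a right-hand side which is either a character $\sigma\in\Sigma$ (then $\mathrm h(X)=\mathrm w(X)=1$), or $Y\oplus_{\mathrm h} Z$ with $Y,Z\in\mathcal V$, $\mathrm h(X)=\mathrm h(Y)=\mathrm h(Z)$, $\mathrm w(X)=\mathrm w(Y)+\mathrm w(Z)$, or $Y\oplus_{\mathrm v}Z$ with $Y,Z\in\mathcal V$,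 $\mathrm w(X)=\mathrm w(Y)=\mathrm w(Z)$, $\mathrm h(X)=\mathrm h(Y)+\mathrm h(Z)$; the relation ''$Y$ occurs in the right-hand side of $X$'' must be acyclic. The expansion $\exp(X)$ is defined recursively, and $\exp(\mathcal G)=\exp(\mathcal S)$ is the derived string. The size $|\mathcal G|$ is the total number of symbols (nonterminals and characters) on all right-hand sides. A 1D SLP is a 2D SLP using only character and horizontal-concatenation productions; it derives a $1\times n$ string, identified with an ordinary string of length $n$. *)

(* Defs.v *)
From mathcomp Require Import all_boot.
Set Implicit Arguments. Unset Strict Implicit. Unset Printing Implicit Defensive.

(* 2D strings over Sigma are represented as the sequence of their rows. *)
Definition str2 (Sigma : Type) := seq (seq Sigma).
Definition height {Sigma : Type} (A : str2 Sigma) : nat := size A.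
Definition width {Sigma : Type} (A : str2 Sigma) : nat := size (head [::] A).

Definition hcat {Sigma : Type} (A B : str2 Sigma) : str2 Sigma :=
  map (fun p => p.1 ++ p.2) (zip A B).
Definition vcat {Sigma : Type} (A B : str2 Sigma) : str2 Sigma := A ++ B.

(* Right-hand sides: nonterminals are natural numbers (indices of rules). *)
Inductive rhs (Sigma : Type) :=
  | RChar of Sigma
  | RH of nat & nat
  | RV of nat & nat.
Arguments RChar {Sigma}. Arguments RH {Sigma}. Arguments RV {Sigma}.

(* A grammar is a list of rules; rule i is the RHS of nonterminal i. *)
Definition grammar (Sigma : Type) := seq (rhs Sigma).

Definition step {Sigma : Type} (acc : seq (str2 Sigma)) (r : rhs Sigma) : str2 Sigma :=
  match r with
  | RChar a => [:: [:: a]]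
  | RH j k => hcat (nth [::] acc j) (nth [::] acc k)
  | RV j k => vcat (nth [::] acc j) (nth [::] acc k)
  end.

Definition expansions {Sigma : Type} (g : grammar Sigma) : seq (str2 Sigma) :=
  foldl (fun acc r => rcons acc (step acc r)) [::] g.

Definition expand {Sigma : Type} (g : grammar Sigma) (i : nat) : str2 Sigma :=
  nth [::] (expansions g) i.

(* Well-formedness of a 2D SLP: acyclicity (each rule refers only to
   earlier nonterminals) and the dimension constraints. *)
Definition valid_rule {Sigma : Type} (g : grammar Sigma) (i : nat) (r : rhs Sigma) : Prop :=
  match r with
  | RChar _ => True
  | RH j k => [/\ j < i, k < i & height (expand g j) = height (expand g k)]
  | RV j k => [/\ j < i, k < i & width (expand g j) = width (expand g k)]
  end.

Definition is_SLP2 {Sigma : Type} (g : grammar Sigma) (s : nat) : Prop :=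
  s < size g /\ forall i, i < size g -> valid_rule g i (nth (RH 0 0) g i).

(* A 1D SLP: a 2D SLP using only character and horizontal rules. *)
Definition is_SLP1 {Sigma : Type} (g : grammar Sigma) (s : nat) : Prop :=
  is_SLP2 g s /\ all (fun r => if r is RV _ _ then false else true) g.

(* Size: total number of symbols on right-hand sides. *)
Definition rhs_size {Sigma : Type} (r : rhs Sigma) : nat :=
  match r with RChar _ => 1 | _ => 2 end.
Definition gsize {Sigma : Type} (g : grammar Sigma) : nat := sumn (map rhs_size g).

(* Main.v *)
Require Import Defs.
From mathcomp Require Import all_boot.
Set Implicit Arguments. Unset Strict Implicit. Unset Printing Implicit Defensive.
From mathcomp Require Import zify.

Section Aux.
Variable Sigma : Type.
Implicit Types (g : grammar Sigma) (acc : seq (str2 Sigma)).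

Lemma expansions_rcons g r : expansions (rcons g r) = rcons (expansions g) (step (expansions g) r).
Proof. by rewrite /expansions foldl_rcons. Qed.

Lemma size_expansions g : size (expansions g) = size g.
Proof. elim/last_ind: g => [|g r IH] //; by rewrite expansions_rcons !size_rcons IH. Qed.

Definition refs_lt (n : nat) (r : rhs Sigma) : bool :=
  match r with RChar _ => true | RH j k => (j < n) && (k < n) | RV j k => (j < n) && (k < n) end.

Lemma step_cat acc t r : refs_lt (size acc) r -> step (acc ++ t) r = step acc r.
Proof. case: r => [a|j k|j k] //= /andP[hj hk]; by rewrite !nth_cat hj hk. Qed.

Lemma refs_lt_mono m n r : m <= n -> refs_lt m r -> refs_lt n r.
Proof. move=> mn; case: r => [a|j k|j k] //= /andP[hj hk]; apply/andP; split.
all: by apply: leq_trans mn. Qed.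

Lemma map_step_cat acc t l : all (refs_lt (size acc)) l ->
  map (step (acc ++ t)) l = map (step acc) l.
Proof. elim: l => [|r l IH] //= /andP[hr hl]; by rewrite step_cat // IH. Qed.

Lemma foldl_push acc l : all (refs_lt (size acc)) l ->
  foldl (fun acc r => rcons acc (step acc r)) acc l = acc ++ map (step acc) l.
Proof.
elim: l acc => [|r l IH] acc /=; first by rewrite cats0.
case/andP=> hr hl.
rewrite IH; last first.
  apply: sub_all hl => x; apply: refs_lt_mono; by rewrite size_rcons leqnSn.
rewrite -cats1 -catA /=; congr (_ ++ (_ :: _)).
by rewrite map_step_cat.
Qed.

Lemma expansions_push g l : all (refs_lt (size g)) l ->
  expansions (g ++ l) = expansions g ++ map (step (expansions g)) l.
Proof.
move=> h; rewrite {1}/expansions foldl_cat -/(expansions g) foldl_push //.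
by rewrite size_expansions.
Qed.

Lemma foldl_prefix acc l : exists t,
  foldl (fun acc r => rcons acc (step acc r)) acc l = acc ++ t.
Proof. elim: l acc => [|r l IH] acc /=; first by exists [::]; rewrite cats0.
case: (IH (rcons acc (step acc r))) => t ->; exists (step acc r :: t); by rewrite -cats1 -catA. Qed.

Lemma expansions_take g n : n <= size g -> expansions (take n g) = take n (expansions g).
Proof.
move=> hn.
rewrite -{2}(cat_take_drop n g) {2}/expansions foldl_cat -/(expansions (take n g)).
case: (foldl_prefix (expansions (take n g)) (drop n g)) => t ->.
by rewrite take_size_cat // size_expansions size_takel.
Qed.
Lemma nth_expansions g n : n < size g ->
  nth [::] (expansions g) n = step (take n (expansions g)) (nth (RH 0 0) g n).
Proof.
move=> hn.
have e := expansions_take hn.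
rewrite (take_nth (RH 0 0) hn) expansions_rcons in e.
rewrite expansions_take in e; last exact: ltnW.
have : nth [::] (take n.+1 (expansions g)) n = nth [::] (expansions g) n by rewrite nth_take.
rewrite -e nth_rcons size_takel; last by rewrite size_expansions ltnW.
by rewrite ltnn eqxx => <-.
Qed.

Definition row g x : seq Sigma := head [::] (expand g x).
Definition notRV (r : rhs Sigma) := if r is RV _ _ then false else true.
Definition WF1 g := forall x, x < size g ->
  [/\ refs_lt x (nth (RH 0 0) g x), notRV (nth (RH 0 0) g x) & expand g x = [:: row g x]].
Definition row1 g (r : rhs Sigma) : seq Sigma :=
  match r with RChar a => [:: a] | RH a b => row g a ++ row g b | RV _ _ => [::] end.

Lemma push_ok g l : WF1 g -> all (fun r => refs_lt (size g) r && notRV r) l ->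
  [/\ WF1 (g ++ l), (forall x, x < size g -> row (g ++ l) x = row g x)
    & (forall t, t < size l -> row (g ++ l) (size g + t) = row1 g (nth (RH 0 0) l t))].
Proof.
move=> wf hl.
have hl' : all (refs_lt (size g)) l by apply: sub_all hl => r /andP[].
have E := expansions_push hl'.
have old x : x < size g -> expand (g ++ l) x = expand g x.
  by move=> hx; rewrite /expand E nth_cat size_expansions hx.
have hnth t : t < size l -> refs_lt (size g) (nth (RH 0 0) l t) && notRV (nth (RH 0 0) l t).
  by move=> ht; move/all_nthP: hl; apply.
have new t : t < size l -> expand (g ++ l) (size g + t) = [:: row1 g (nth (RH 0 0) l t)].
  move=> ht; rewrite /expand E nth_cat size_expansions ltnNge leq_addr /= addKn.
  rewrite (nth_map (RH 0 0)) //.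
  case/andP: (hnth t ht); case: (nth (RH 0 0) l t) => [a|a b|a b] //= /andP[ha hb] _.
  have [_ _ ea] := wf a ha; have [_ _ eb] := wf b hb.
  by rewrite /expand in ea eb; rewrite ea eb.
have newr t : t < size l -> row (g ++ l) (size g + t) = row1 g (nth (RH 0 0) l t).
  by move=> ht; rewrite /row new.
split=> //; last by move=> x hx; rewrite /row old.
move=> x; rewrite size_cat => hx.
case: (ltnP x (size g)) => hxg.
  have [h1 h2 h3] := wf x hxg.
  by rewrite nth_cat hxg /row old // -/(row g x).
rewrite -(subnKC hxg) nth_cat ltnNge leq_addr /= addKn.
have ht : x - size g < size l by rewrite ltn_subLR.
case/andP: (hnth _ ht) => h1 h2; split=> //.
  by apply: refs_lt_mono h1; rewrite leq_addr.
by rewrite newr // new.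
Qed.

Lemma hcat_map_zip T (f : T -> seq Sigma) (A B : seq T) :
  hcat (map f A) (map f B) = map (fun p => f p.1 ++ f p.2) (zip A B).
Proof. rewrite /hcat; elim: A B => [|a A IH] [|b B] //=; by rewrite IH. Qed.

Lemma take_hcat N (X Y : str2 Sigma) : take N (hcat X Y) = hcat (take N X) (take N Y).
Proof. rewrite /hcat; elim: N X Y => [|N IH] [|a X] [|b Y] //=; by rewrite IH. Qed.

Lemma take_take_cat T N M1 M2 (x y : seq T) : N <= M1 -> N <= M2 ->
  take N (take M1 x ++ take M2 y) = take N (x ++ y).
Proof.
elim: x N M1 M2 => [|a x IH] N M1 M2 /=.
  by move=> _ h; rewrite take_takel.
case: N => [|N]; first by rewrite !take0.
case: M1 => [|M1] //= h1 h2.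
by rewrite IH // ltnW.
Qed.

Lemma map_iota_nth T (f : nat -> T) d (L : seq T) s :
  (forall t, t < size L -> f (s + t) = nth d L t) -> map f (iota s (size L)) = L.
Proof.
elim: L s => [|a L IH] s //= h.
have := h 0 isT; rewrite addn0 => ->; congr (_ :: _).
apply: IH => t ht; rewrite addSnnS; exact: (h t.+1).
Qed.

Lemma gsize_cat g l : gsize (g ++ l) = gsize g + gsize l.
Proof. by rewrite /gsize map_cat sumn_cat. Qed.

Lemma all_refs_zip m (A B : seq nat) : all (fun x => x < m) A -> all (fun x => x < m) B ->
  all (fun r => refs_lt m r && notRV r) (map (fun p => RH p.1 p.2) (zip A B)).
Proof. elim: A B => [|a A IH] [|b B] //= /andP[ha hA] /andP[hb hB]; by rewrite ha hb IH. Qed.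

Lemma gsize_RH (ps : seq (nat * nat)) : gsize (map (fun p => @RH Sigma p.1 p.2) ps) = 2 * size ps.
Proof. elim: ps => [|p ps IH] //=; rewrite /gsize /= -/(gsize _) IH; by rewrite mulnS. Qed.

Definition rowsF (N : nat) (st : grammar Sigma * seq (seq nat)) (r : rhs Sigma) :=
  match r with
  | RChar a => (rcons st.1 (RChar a), rcons st.2 [:: size st.1])
  | RH j k => (st.1 ++ map (fun p => RH p.1 p.2) (zip (nth [::] st.2 j) (nth [::] st.2 k)),
               rcons st.2 (iota (size st.1) (size (zip (nth [::] st.2 j) (nth [::] st.2 k)))))
  | RV j k => (st.1, rcons st.2 (take N (nth [::] st.2 j ++ nth [::] st.2 k)))
  end.

Definition Inv N (E : seq (str2 Sigma)) n (st : grammar Sigma * seq (seq nat)) :=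
  [/\ WF1 st.1, size st.2 = n, gsize st.1 <= 2 * N * n &
    forall i, i < n -> all (fun x => x < size st.1) (nth [::] st.2 i) /\
       map (row st.1) (nth [::] st.2 i) = take N (nth [::] E i)].

Lemma all_lt_mono m m' (A : seq nat) : m <= m' -> all (fun x => x < m) A -> all (fun x => x < m') A.
Proof. move=> h; apply: sub_all => x hx; exact: leq_trans hx h. Qed.

Lemma map_row_old g l (A : seq nat) : WF1 g -> all (fun r => refs_lt (size g) r && notRV r) l ->
  all (fun x => x < size g) A -> map (row (g ++ l)) A = map (row g) A.
Proof.
move=> wf hl; have [_ ho _] := push_ok wf hl.
elim: A => [|a A IH] //= /andP[ha hA]; by rewrite ho // IH.
Qed.

Lemma all_take_of T (p : pred T) N (s : seq T) : all p s -> all p (take N s).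
Proof. by rewrite -{1}(cat_take_drop N s) all_cat => /andP[]. Qed.

Lemma Inv_step N E n st r : 0 < N -> Inv N E n st -> refs_lt n r ->
  nth [::] E n = step E r -> Inv N E n.+1 (rowsF N st r).
Proof.
case: st => g tbl hN [wf hsz hgs hrows] hr hE.
have oldtbl y i : i < n -> nth [::] (rcons tbl y) i = nth [::] tbl i.
  by move=> hi; rewrite nth_rcons hsz hi.
have newtbl y : nth [::] (rcons tbl y) n = y.
  by rewrite nth_rcons hsz ltnn eqxx.
case: r hr hE => [a|j k|j k] /= hr hE.
- have hl : all (fun r => refs_lt (size g) r && notRV r) [:: RChar a] by [].
  have [wf' ho hn] := push_ok wf hl.
  rewrite -cats1; split => //=.
  + by rewrite size_rcons hsz.
  + rewrite gsize_cat /= mulnS addnC; apply: leq_add => //.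
    by rewrite /gsize /= muln_gt0 hN.
  + move=> i; rewrite ltnS leq_eqVlt => /orP[/eqP->|hi].
      rewrite newtbl /= size_cat addn1 ltnSn; split=> //.
      have := hn 0 isT; rewrite addn0 => -> /=; rewrite hE /=.
      by rewrite take_oversize.
    rewrite oldtbl //; have [h1 h2] := hrows i hi; split.
      by apply: all_lt_mono h1; rewrite size_cat leq_addr.
    by rewrite map_row_old.
- case/andP: hr => hj hk.
  have [aj rj] := hrows j hj; have [ak rk] := hrows k hk.
  set ps := zip _ _.
  have hl := all_refs_zip aj ak; rewrite -/ps in hl.
  have [wf' ho hn] := push_ok wf hl.
  have hsps : size ps <= N.
    rewrite /ps size_zip; apply: leq_trans (geq_minl _ _) _.
    by rewrite -(size_map (row g)) rj size_take geq_minl.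
  split => //=.
  + by rewrite size_rcons hsz.
  + rewrite gsize_cat gsize_RH mulnS addnC; apply: leq_add => //.
    by rewrite leq_mul2l.
  + move=> i; rewrite ltnS leq_eqVlt => /orP[/eqP->|hi].
      rewrite newtbl; split.
        apply/allP => x; rewrite mem_iota size_cat size_map => /andP[_ ->] //.
      rewrite hE /= -(size_map (fun p : nat * nat => row g p.1 ++ row g p.2) ps).
      rewrite (@map_iota_nth _ _ [::] (map (fun p : nat * nat => row g p.1 ++ row g p.2) ps)).
        by rewrite -hcat_map_zip rj rk take_hcat.
      rewrite size_map => t ht; rewrite hn ?size_map //.
      rewrite (nth_map (0,0)) // (nth_map (0,0)) //.
    rewrite oldtbl //; have [h1 h2] := hrows i hi; split.
      by apply: all_lt_mono h1; rewrite size_cat leq_addr.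
    by rewrite map_row_old.
- case/andP: hr => hj hk.
  have [aj rj] := hrows j hj; have [ak rk] := hrows k hk.
  split => //=.
  + by rewrite size_rcons hsz.
  + by apply: leq_trans hgs _; rewrite leq_mul2l leqnSn orbT.
  + move=> i; rewrite ltnS leq_eqVlt => /orP[/eqP->|hi].
      rewrite newtbl; split.
        have hc : all (fun x => x < size g) (nth [::] tbl j ++ nth [::] tbl k) by rewrite all_cat aj ak.
        by apply: all_take_of.
      by rewrite map_take map_cat rj rk hE /vcat take_take_cat.
    by rewrite oldtbl //; apply: hrows.
Qed.

Lemma step_take n E r : refs_lt n r -> step (take n E) r = step E r.
Proof. case: r => [a|j k|j k] //= /andP[hj hk]; by rewrite !nth_take. Qed.

Lemma valid_refs g i r : valid_rule g i r -> refs_lt i r.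
Proof. case: r => [a|j k|j k] //= [hj hk _]; by rewrite hj hk. Qed.

Lemma expansions_nonempty g s : is_SLP2 g s -> forall n, n < size g -> 0 < size (nth [::] (expansions g) n).
Proof.
case=> _ hv n; elim/ltn_ind: n => n IH hn.
have hr := hv n hn.
rewrite nth_expansions // step_take; last exact: valid_refs hr.
move: hr; case: (nth (RH 0 0) g n) => [a|j k|j k] //= [hj hk _].
- rewrite /hcat size_map size_zip leq_min; apply/andP; split; apply: IH => //;
  by apply: ltn_trans hn.
- rewrite /vcat size_cat addn_gt0 IH //; by apply: ltn_trans hn.
Qed.

Lemma build_inv g s N : is_SLP2 g s -> 0 < N -> forall n, n <= size g ->
  Inv N (expansions g) n (foldl (rowsF N) ([::], [::]) (take n g)).
Proof.
move=> [hs hv] hN; elim=> [|n IH] hn.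
  by rewrite take0 /=; split => // x.
rewrite (take_nth (RH 0 0) hn) foldl_rcons.
have hr := valid_refs (hv n hn).
apply: Inv_step => //; first by apply: IH; exact: ltnW.
by rewrite nth_expansions // step_take.
Qed.

Lemma chain g x0 (rest : seq nat) : WF1 g -> x0 < size g -> all (fun x => x < size g) rest ->
  exists g2 s2, [/\ WF1 g2, s2 < size g2,
     row g2 s2 = row g x0 ++ flatten (map (row g) rest) &
     gsize g2 = gsize g + 2 * size rest].
Proof.
elim: rest g x0 => [|y rest IH] g x0 wf hx.
  by move=> _; exists g, x0; rewrite /= cats0 muln0 addn0.
move=> /= /andP[hy hrest].
have hl : all (fun r => refs_lt (size g) r && notRV r) [:: RH x0 y] by rewrite /= hx hy.
have [wf1 ho hn] := push_ok wf hl.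
have hx1 : size g < size (g ++ [:: RH x0 y]) by rewrite size_cat addn1.
have hrest1 : all (fun x => x < size (g ++ [:: RH x0 y])) rest.
  by apply: all_lt_mono hrest; rewrite size_cat leq_addr.
have [g2 [s2 [wf2 hs2 hrow hgs]]] := IH _ _ wf1 hx1 hrest1.
exists g2, s2; split => //.
  rewrite hrow; have := hn 0 isT; rewrite addn0 => -> /=.
  by rewrite map_row_old // catA.
by rewrite hgs gsize_cat /= mulnS addnA.
Qed.

Lemma WF1_SLP1 g s : WF1 g -> s < size g -> is_SLP1 g s.
Proof.
move=> wf hs; split; first split => //.
  move=> i hi; have [h1 h2 h3] := wf i hi.
  move: h1 h2; case: (nth (RH 0 0) g i) => [a|j k|j k] //= /andP[hj hk] _.
  have [_ _ ej] := wf j (ltn_trans hj hi); have [_ _ ek] := wf k (ltn_trans hk hi).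
  by split => //; rewrite /height ej ek.
apply/(all_nthP (RH 0 0)) => i hi; have [_ h _] := wf i hi.
by move: h; case: (nth (RH 0 0) g i).
Qed.

Lemma size_le_gsize g : size g <= gsize g.
Proof. elim: g => [|r g IH] //=; rewrite /gsize /= -/(gsize g) -add1n leq_add //; by case: r. Qed.
End Aux.

Theorem mainTheorem3 :
  exists c : nat, 0 < c /\
  forall (Sigma : finType) (g : grammar Sigma) (s : nat),
    is_SLP2 g s ->
    height (expand g s) <= width (expand g s) ->
    exists (g' : grammar Sigma) (s' : nat),
      [/\ is_SLP1 g' s',
          gsize g' <= c * gsize g * height (expand g s)
        & expand g' s' = [:: flatten (expand g s)]].
Proof.
exists 4; split => // Sigma g s hslp _.
have [hs hv] := hslp.
have hN : 0 < height (expand g s) by apply: (expansions_nonempty hslp).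
have [wf hsz hgs hrows] := build_inv hslp hN (leqnn (size g)).
rewrite take_size in wf hsz hgs hrows.
set st := foldl _ _ g in wf hsz hgs hrows.
have [aL rL] := hrows s hs.
rewrite take_oversize // in rL.
move: aL rL; case: (nth [::] st.2 s) => [|x0 rest].
  move=> _ /(congr1 size) /= h; move: hN; by rewrite /height /expand -h.
move=> /= /andP[hx0 hrest] rL.
have [g2 [s2 [wf2 hs2 hrow hg2]]] := chain wf hx0 hrest.
exists g2, s2; split.
- exact: WF1_SLP1.
- have hsr : (size rest).+1 = height (expand g s).
    by have := congr1 size rL; rewrite /= size_map.
  have h1 := size_le_gsize g.
  have h2 : 0 < size g by apply: leq_ltn_trans hs.
  rewrite hg2; move: hgs h1 h2 hsr.
  set M := height _; set a := gsize st.1; set b := gsize g; set c := size g.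
  move=> *; nia.
- have [_ _ ->] := wf2 s2 hs2; rewrite hrow /expand -rL /=.
  by [].
Qed.
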